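(* Consider $N$ agents $\mathcal{V}=\{1,\dots,N\}$ interacting over a fixed graph in which agent $i$ has the nonempty neighbor set $\mathcal{N}_i$ of cardinality $n_i$. Let $\beta\in[0,1]$ and let $(q_p(k))_{k\ge0}$ be a sequence with values in $\{-1,1\}$. The opinions evolve by $$\theta_i(k+1)=\theta_i(k)+\bigl(1-\theta_i(k)^2\bigr)\Bigl[\beta\bigl(q_p(k)-\theta_i(k)\bigr)+(1-\beta)\frac{1}{n_i}\sum_{j\in\mathcal{N}_i}\bigl(q_j(k)-\theta_i(k)\bigr)\Bigr],$$ with actions $q_j(k)=1$ if $\theta_j(k)>0$ or ($\theta_j(k)=0$ and $q_j(k-1)=1$), and $q_j(k)=-1$ if $\theta_j(k)<0$ or ($\theta_j(k)=0$ and $q_j(k-1)=-1$). Let $n_i^{\pm}(k)=|\{j\in\mathcal{N}_i:q_j(k)=\pm1\}|$. Let $i\in\mathcal{V}$ with $\theta_i(0)\in(-1,1)$ and assume $\beta<1/(1+n_i)$. Then for every $k$: - if $n_i^+(k)>n_i^-(k)$ and $q_i(k)=1$, then $q_i(k+1)=1$; - if $n_i^-(k)>n_i^+(k)$ and $q_i(k)=-1$, then $q_i(k+1)=-1$.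
   Context: Opinions take values in $[-1,1]$. The neighbor set $\mathcal{N}_i$ consists of the agents $j$ with $(j,i)$ an edge of the graph. *)

(* Defs.v *)
From mathcomp Require Import all_boot all_order all_algebra.
Set Implicit Arguments. Unset Strict Implicit. Unset Printing Implicit Defensive.
Import Order.TTheory GRing.Theory Num.Theory.
Local Open Scope ring_scope.

Definition nbrs (N : nat) (E : rel 'I_N) (i : 'I_N) : {set 'I_N} :=
  [set j | E j i].

(* Actions q_j(k).  [q0 j] plays the role of q_j(-1) (in {-1,1}),
   used only when theta_j(0) = 0. *)
Fixpoint action (R : realFieldType) (N : nat) (q0 : 'I_N -> R)
    (theta : nat -> 'I_N -> R) (k : nat) (j : 'I_N) : R :=
  match k with
  | 0 => if 0 < theta 0%N j then 1 else if theta 0%N j < 0 then -1 else q0 j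
  | k'.+1 => if 0 < theta k j then 1 else if theta k j < 0 then -1
             else action q0 theta k' j
  end.

Definition nplus (R : realFieldType) (N : nat) (E : rel 'I_N)
    (q : nat -> 'I_N -> R) (k : nat) (i : 'I_N) : nat :=
  #|[set j in nbrs E i | q k j == 1]|.
Definition nminus (R : realFieldType) (N : nat) (E : rel 'I_N)
    (q : nat -> 'I_N -> R) (k : nat) (i : 'I_N) : nat :=
  #|[set j in nbrs E i | q k j == -1]|.

(* Main.v *)
Require Import Defs.
From mathcomp Require Import all_boot all_order all_algebra.
From mathcomp Require Import ring lra.
Import Order.TTheory GRing.Theory Num.Theory.
Local Open Scope ring_scope.

Section H.
Variables (R : realFieldType) (N : nat) (q0 : 'I_N -> R) (theta : nat -> 'I_N -> R).

Lemma act_pm (hq0 : forall j, q0 j = 1 \/ q0 j = -1) k j :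
  action q0 theta k j = 1 \/ action q0 theta k j = -1.
Proof.
elim: k j => [|k IH] j /=.
  by case: ifP => _; [left|case: ifP => _; [right|exact: hq0]].
by case: ifP => _; [left|case: ifP => _; [right|exact: IH]].
Qed.

Lemma act1_ge0 k j : action q0 theta k j = 1 -> 0 <= theta k j.
Proof.
have hne : (-1 : R) <> 1.
  by move=> e; have : (-1 : R) < 1; [lra | rewrite e ltxx].
by case: k => [|k] /= H; rewrite leNgt; apply/negP => hlt; move: H;
  rewrite ltNge (ltW hlt) /= hlt.
Qed.

Lemma actm1_le0 k j : action q0 theta k j = -1 -> theta k j <= 0.
Proof.
have hne : (1 : R) <> -1.
  by move=> e; have : (-1 : R) < 1; [lra | rewrite -e ltxx].
by case: k => [|k] /= H; rewrite leNgt; apply/negP => hlt; move: H;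
  rewrite hlt.
Qed.

End H.

Lemma sum_pm (R : realFieldType) (N : nat) (S : {set 'I_N}) (a : 'I_N -> R) :
  (forall l, a l = 1 \/ a l = -1) ->
  \sum_(l in S) a l = #|[set l in S | a l == 1]|%:R - #|[set l in S | a l == -1]|%:R.
Proof.
move=> ha.
rewrite (bigID (fun l => a l == 1)) /=.
have -> : \sum_(l in S | a l == 1) a l = \sum_(l in [set l in S | a l == 1]) 1.
  rewrite [LHS]big_mkcond [RHS]big_mkcond /=; apply: eq_bigr => l _.
  rewrite inE; case: (l \in S) => //=; case: eqP => //.
have -> : \sum_(l in S | a l != 1) a l = \sum_(l in [set l in S | a l == -1]) (-1).
  rewrite [LHS]big_mkcond [RHS]big_mkcond /=; apply: eq_bigr => l _.
  rewrite inE; case: (l \in S) => //=.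
  have h1 : (-1 : R) != 1.
    by apply/eqP => e; have : (-1 : R) < 1; [lra | rewrite e ltxx].
  have h2 : (1 : R) != -1 by rewrite eq_sym.
  by case: (ha l) => ->; rewrite ?eqxx ?(negbTE h1) ?(negbTE h2).
by rewrite !sumr_const mulNrn.
Qed.

Lemma sum_bounds (R : realFieldType) (N : nat) (S : {set 'I_N}) (a : 'I_N -> R) :
  (forall l, a l = 1 \/ a l = -1) ->
  - (#|S|%:R) <= \sum_(l in S) a l <= #|S|%:R.
Proof.
move=> ha; apply/andP; split.
  rewrite -sumr_const -sumrN; apply: ler_sum => l _; case: (ha l) => ->; lra.
rewrite -sumr_const; apply: ler_sum => l _; case: (ha l) => ->; lra.
Qed.

Theorem mainTheorem4 (R : realFieldType) (N : nat) (E : rel 'I_N)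
  (beta : R) (qp : nat -> R) (q0 : 'I_N -> R) (theta : nat -> 'I_N -> R)
  (i : 'I_N) :
  (forall j : 'I_N, nbrs E j != set0) ->
  0 <= beta <= 1 ->
  (forall k, qp k = 1 \/ qp k = -1) ->
  (forall j, q0 j = 1 \/ q0 j = -1) ->
  (forall j, -1 <= theta 0%N j <= 1) ->
  (forall k j, theta k.+1 j =
     theta k j + (1 - theta k j ^+ 2) *
       (beta * (qp k - theta k j) +
        (1 - beta) * (#|nbrs E j|%:R)^-1 *
          \sum_(l in nbrs E j) (action q0 theta k l - theta k j))) ->
  -1 < theta 0%N i < 1 ->
  beta < (1 + #|nbrs E i|%:R)^-1 ->
  forall k : nat,
    ((nminus E (action q0 theta) k i < nplus E (action q0 theta) k i)%N ->
      action q0 theta k i = 1 -> action q0 theta k.+1 i = 1) /\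
    ((nplus E (action q0 theta) k i < nminus E (action q0 theta) k i)%N ->
      action q0 theta k i = -1 -> action q0 theta k.+1 i = -1).
Proof.
move=> hne /andP[hb0 hb1] hqp hq0 hth0 hrec _ hbeta.
have hpm := @act_pm _ _ q0 theta hq0.
have key : forall k j, theta k.+1 j =
    theta k j ^+ 3 + (1 - theta k j ^+ 2) *
      (beta * qp k + (1 - beta) * (#|nbrs E j|%:R)^-1 *
         \sum_(l in nbrs E j) action q0 theta k l).
  move=> k j.
  have hn : (#|nbrs E j|%:R : R) != 0.
    by rewrite pnatr_eq0 cards_eq0 hne.
  rewrite hrec sumrB sumr_const -mulr_natr.
  by field.
have hc : forall k j, -1 <= beta * qp k + (1 - beta) * (#|nbrs E j|%:R)^-1 *
         \sum_(l in nbrs E j) action q0 theta k l <= 1.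
  move=> k j.
  have hn : (0 : R) < #|nbrs E j|%:R by rewrite ltr0n card_gt0 hne.
  have /andP[s1 s2] := @sum_bounds _ _ (nbrs E j) _ (hpm k).
  set n := (#|nbrs E j|%:R : R) in hn s1 s2 *; set s := \sum_(l in _) _ in s1 s2 *.
  have hni : 0 < n^-1 by rewrite invr_gt0.
  have e : n^-1 * n = 1 by rewrite mulVf // gt_eqF.
  have a1 : n^-1 * s <= 1 by rewrite -e ler_pM2l.
  have a2 : -1 <= n^-1 * s by rewrite -e -mulrN ler_pM2l.
  by case: (hqp k) => ->; apply/andP; split; nra.
have inv : forall k j, -1 <= theta k j <= 1.
  elim=> [|k IH] j; first exact: hth0.
  rewrite key; move: (hc k j) (IH j).
  set c := (beta * qp k + _); set x := theta k j.
  move=> /andP[c1 c2] /andP[x1 x2]; clearbody c x.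
  have h1 : 0 <= (1 - x) * (x ^+ 2) by apply: mulr_ge0; [lra | exact: sqr_ge0].
  have h2 : 0 <= (1 + x) * (x ^+ 2) by apply: mulr_ge0; [lra | exact: sqr_ge0].
  have h3 : 0 <= (1 - c) * ((1 - x) * (1 + x)) by apply: mulr_ge0; [lra | apply: mulr_ge0; lra].
  have h4 : 0 <= (1 + c) * ((1 - x) * (1 + x)) by apply: mulr_ge0; [lra | apply: mulr_ge0; lra].
  apply/andP; split; nra.
move=> k.
have hn : (0 : R) < #|nbrs E i|%:R by rewrite ltr0n card_gt0 hne.
have hs := @sum_pm _ _ (nbrs E i) _ (hpm k).
rewrite /nplus /nminus.
set P := #|[set l in nbrs E i | action q0 theta k l == 1]| in hs *.
set M := #|[set l in nbrs E i | action q0 theta k l == -1]| in hs *.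
have hinv := inv k i; move: hinv (key k i).
set n := (#|nbrs E i|%:R : R) in hn hbeta *; set s := \sum_(l in _) _ in hs *.
move=> /andP[x1 x2] ek.
have hni : 0 < n^-1 by rewrite invr_gt0.
have e : n^-1 * n = 1 by rewrite mulVf // gt_eqF.
have hb' : beta * (1 + n) < 1.
  have hpos : 0 < 1 + n by lra.
  by move: hbeta; rewrite -(ltr_pM2r hpos) mulVf // gt_eqF.
have hb2 : beta < (1 - beta) * n^-1.
  have : beta * n < 1 - beta by lra.
  rewrite -(ltr_pM2r hni) -mulrA mulfV ?gt_eqF // mulr1 => h; lra.
split=> hPM ha.
- have hx := @act1_ge0 _ _ q0 theta k i ha.
  have s1 : 1 <= s.
    rewrite hs; have : ((M + 1)%:R : R) <= P%:R by rewrite ler_nat addn1.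
    rewrite natrD; lra.
  have hc' : 0 < beta * qp k + (1 - beta) * n^-1 * s.
    have : (1 - beta) * n^-1 <= (1 - beta) * n^-1 * s.
      rewrite -{1}(mulr1 ((1 - beta) * n^-1)) ler_wpM2l //.
      by apply: mulr_ge0 => //; [lra | exact: ltW].
    by case: (hqp k) => ->; lra.
  have t1 : 0 <= theta k i ^+ 3 by rewrite exprn_ge0.
  have t0 : 0 <= 1 - theta k i ^+ 2.
    by rewrite subr_ge0 expr2; apply: mulr_ile1.
  have t2 := mulr_ge0 t0 (ltW hc').
  have ge : 0 <= theta k.+1 i by rewrite ek; lra.
  rewrite /= ; case: ifP => // h1; case: ifP => h2 //.
  by move: h2; rewrite ltNge ge.
- have hx := @actm1_le0 _ _ q0 theta k i ha.
  have s1 : s <= -1.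
    rewrite hs; have : ((P + 1)%:R : R) <= M%:R by rewrite ler_nat addn1.
    rewrite natrD; lra.
  have hc' : beta * qp k + (1 - beta) * n^-1 * s < 0.
    have : (1 - beta) * n^-1 * s <= - ((1 - beta) * n^-1).
      rewrite -(mulrN1 ((1 - beta) * n^-1)) ler_wpM2l //.
      by apply: mulr_ge0 => //; [lra | exact: ltW].
    by case: (hqp k) => ->; lra.
  have t1 : theta k i ^+ 3 <= 0.
    by rewrite exprS mulr_le0_ge0 // sqr_ge0.
  have t0 : 0 <= 1 - theta k i ^+ 2.
    rewrite subr_ge0 -sqrrN expr2; apply: mulr_ile1; lra.
  have t2 : (1 - theta k i ^+ 2) * (beta * qp k + (1 - beta) * n^-1 * s) <= 0.
    by apply: mulr_ge0_le0 => //; exact: ltW.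
  have le : theta k.+1 i <= 0 by rewrite ek; lra.
  rewrite /= ; case: ifP => h1.
    by move: h1; rewrite ltNge le.
  by case: ifP.
Qed.
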